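(* Let $R$ be an associative ring with identity, and let $a,b,c,d\in R$ satisfy $bdb=bac$ and $dbd=acd$. If $ac\in R^{\dagger}$, then $bd\in R^{\dagger}$, $(bd)^{\dagger}=b\big((ac)^{\dagger}\big)^2d$, and $i(bd)\le i(ac)+1$.
   Context: For $x\in R$, $\mathrm{comm}(x)=\{y\in R : xy=yx\}$ and $\mathrm{comm}^2(x)=\{y\in R : yz=zy \text{ for all } z\in\mathrm{comm}(x)\}$. $R^{rad}$ is the Jacobson radical of $R$. An element $x$ has a p-Drazin (pseudo Drazin) inverse if there is $y\in R$ with $y=yxy$, $y\in\mathrm{comm}^2(x)$ and $x^k-x^{k+1}y\in R^{rad}$ for some $k\in\mathbb{N}$; such $y$ is unique and denoted $x^{\dagger}$; $R^{\dagger}$ is the set of such $x$. The smallest such $k$ is the p-Drazin index $i(x)$. *)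

(* Defs.v *)
From HB Require Import structures.
From mathcomp Require Import all_boot all_order all_algebra.
Set Implicit Arguments. Unset Strict Implicit. Unset Printing Implicit Defensive.
Import GRing.Theory.
Local Open Scope ring_scope.

Definition left_ideal (R : pzRingType) (I : R -> Prop) : Prop :=
  [/\ I 0,
      (forall x y, I x -> I y -> I (x + y)),
      (forall x, I x -> I (- x)) &
      (forall r x, I x -> I (r * x))].

Definition maximal_left_ideal (R : pzRingType) (I : R -> Prop) : Prop :=
  [/\ left_ideal I, ~ I 1 &
      forall J : R -> Prop, left_ideal J -> (forall x, I x -> J x) ->
        ~ J 1 -> forall x, J x -> I x].

Definition jacobson (R : pzRingType) (x : R) : Prop :=
  forall I : R -> Prop, maximal_left_ideal I -> I x.

Definition comm_set (R : pzRingType) (x : R) : R -> Prop :=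
  fun y => x * y = y * x.
Definition comm2_set (R : pzRingType) (x : R) : R -> Prop :=
  fun y => forall z, comm_set x z -> y * z = z * y.

Definition pdrazin_inv (R : pzRingType) (x y : R) : Prop :=
  [/\ y = y * x * y, comm2_set x y &
      exists k : nat, (0 < k)%N /\ jacobson (x ^+ k - x ^+ k.+1 * y)].

Definition pdrazin (R : pzRingType) (x : R) : Prop := exists y, pdrazin_inv x y.

Definition pdrazin_index (R : pzRingType) (x : R) (n : nat) : Prop :=
  exists y, [/\ pdrazin_inv x y, (0 < n)%N, jacobson (x ^+ n - x ^+ n.+1 * y) &
    forall k : nat, (0 < k)%N -> jacobson (x ^+ k - x ^+ k.+1 * y) -> (n <= k)%N].

(* Main.v *)
Require Import Defs.
From HB Require Import structures.
From mathcomp Require Import all_boot all_order all_algebra.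
From Stdlib Require Import Classical.
Set Implicit Arguments. Unset Strict Implicit.
Import GRing.Theory.
Local Open Scope ring_scope.

Lemma max_gen (R : pzRingType) (I : R -> Prop) (q : R) :
  maximal_left_ideal I -> ~ I q -> exists i u, I i /\ 1 = i + u * q.
Proof.
move=> [[I0 ID IN IM] I1 Imax] Iq.
apply: NNPP => H.
pose J := fun s : R => exists i u, I i /\ s = i + u * q.
have lJ : left_ideal J.
  split.
  - by exists 0, 0; rewrite mul0r addr0.
  - move=> x y [i [u [Ii ->]]] [i' [u' [Ii' ->]]].
    exists (i + i'), (u + u'); split; first exact: ID.
    by rewrite mulrDl addrACA.
  - move=> x [i [u [Ii ->]]]; exists (- i), (- u); split; first exact: IN.
    by rewrite opprD mulNr.
  - move=> r x [i [u [Ii ->]]]; exists (r * i), (r * u); split; first exact: IM.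
    by rewrite mulrDr mulrA.
have sIJ : forall x, I x -> J x by move=> x Ix; exists x, 0; rewrite mul0r addr0.
have nJ1 : ~ J 1 by move=> [i [u [Ii E]]]; apply: H; exists i, u.
apply: Iq; apply: (Imax J lJ sIJ nJ1).
by exists 0, 1; rewrite mul1r add0r.
Qed.

Lemma colon_max (R : pzRingType) (I : R -> Prop) (r : R) :
  maximal_left_ideal I -> ~ I r -> maximal_left_ideal (fun s => I (s * r)).
Proof.
move=> HI Ir; have [[I0 ID IN IM] I1 Imax] := HI.
split.
- split.
  + by rewrite mul0r.
  + by move=> x y Hx Hy; rewrite mulrDl; apply: ID.
  + by move=> x Hx; rewrite mulNr; apply: IN.
  + by move=> r' x Hx; rewrite -mulrA; apply: IM.
- by rewrite mul1r.
- move=> J [J0 JD JN JM] sub nJ1 s Js.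
  apply: NNPP => Isr.
  have [i [u [Ii E]]] := max_gen HI Isr.
  have Ee : I ((1 - r * u * s) * r).
    have -> : (1 - r * u * s) * r = r * i.
      have Er : r = r * i + r * u * s * r by rewrite -{1}(mulr1 r) E mulrDr !mulrA.
      by rewrite mulrBl mul1r {1}Er addrK.
    exact: IM.
  apply: nJ1.
  have -> : (1 : R) = (1 - r * u * s) + (r * u) * s by rewrite subrK.
  apply: JD; first exact: sub.
  exact: JM.
Qed.

Lemma jac_mull (R : pzRingType) (x r : R) : jacobson x -> jacobson (r * x).
Proof. by move=> H I HI; have [[_ _ _ IM] _ _] := HI; apply: IM; apply: H. Qed.

Lemma jac_mulr (R : pzRingType) (x r : R) : jacobson x -> jacobson (x * r).
Proof.
move=> H I HI; have [[_ _ _ IM] _ _] := HI.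
case: (classic (I r)) => Ir; first exact: IM.
exact: (H _ (colon_max HI Ir)).
Qed.

Section S.
Variables (R : pzRingType) (b d x y : R).
Hypotheses (hb : b * d * b = b * x) (hd : d * b * d = x * d).
Hypotheses (yxy : y = y * x * y) (yC : y * x = x * y) (ydb : y * (d * b) = d * b * y).

Lemma L_hd P : P * d * b * d = P * x * d.
Proof. by rewrite -!mulrA (mulrA d) hd mulrA. Qed.
Lemma L_hb P : P * b * d * b = P * b * x.
Proof. by rewrite -!mulrA (mulrA b) hb mulrA. Qed.
Lemma L_ydb P : P * y * d * b = P * d * b * y.
Proof. by rewrite -!mulrA ydb !mulrA. Qed.
Lemma yyx : y * y * x = y.
Proof. by rewrite -mulrA yC mulrA -yxy. Qed.
Lemma L_yyx P : P * y * y * x = P * y.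
Proof. by rewrite -!mulrA (mulrA y) yyx. Qed.
Lemma xyyy : x * y * y * y = y * y.
Proof. by rewrite -yC -yxy. Qed.
Lemma L_xyyy P : P * x * y * y * y = P * y * y.
Proof. by rewrite -!mulrA (mulrA x) (mulrA _ y) (mulrA _ y) xyyy mulrA. Qed.
Lemma powb n : (b * d) ^+ n * b = b * x ^+ n.
Proof.
elim: n => [|n IH]; first by rewrite !expr0 mul1r mulr1.
by rewrite exprS -mulrA IH !mulrA hb -mulrA -exprS.
Qed.
Lemma powbd n : (b * d) ^+ n.+1 = b * x ^+ n * d.
Proof. by rewrite exprSr mulrA powb. Qed.

Lemma zi : b * y ^+ 2 * d = b * y ^+ 2 * d * (b * d) * (b * y ^+ 2 * d).
Proof.
by rewrite expr2 !mulrA L_hd L_yyx L_ydb hb L_xyyy.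
Qed.

Lemma zc w (hw : b * d * w = w * (b * d)) (hy : y * (d * w * b) = d * w * b * y) :
  b * y ^+ 2 * d * w = w * (b * y ^+ 2 * d).
Proof.
have e1 : b * y * y * d * w = b * y * y * y * (d * b * d) * w.
  by rewrite hd !mulrA L_yyx.
have e2 : d * b * d * w = d * w * b * d by rewrite -!mulrA (mulrA b) hw !mulrA.
have L P : P * y * d * w * b = P * d * w * b * y.
  by rewrite -!mulrA (mulrA d) hy !mulrA.
rewrite expr2 !mulrA e1 -(mulrA _ (d * b * d)) e2 !mulrA L L L hw !mulrA L_hb.
by rewrite L_xyyy.
Qed.

Lemma zj k : jacobson (x ^+ k - x ^+ k.+1 * y) ->
  jacobson ((b * d) ^+ k.+1 - (b * d) ^+ k.+2 * (b * y ^+ 2 * d)).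
Proof.
move=> J.
have -> : (b * d) ^+ k.+1 - (b * d) ^+ k.+2 * (b * y ^+ 2 * d)
   = b * (x ^+ k - x ^+ k.+1 * y) * d.
  rewrite powbd !mulrA powb (exprSr x k.+1) mulrBr mulrBl; congr (_ - _).
  have L P : P * x * y * y = P * y by rewrite -!mulrA (mulrA x) -yC -yxy.
  by rewrite !mulrA L.
by apply: jac_mulr; apply: jac_mull.
Qed.
End S.

Lemma ex_min (P : nat -> Prop) n : P n -> exists m, P m /\ forall k, P k -> (m <= k)%N.
Proof.
elim/ltn_ind: n => n IH Pn.
case: (classic (exists k, (k < n)%N /\ P k)) => [[k [kn Pk]]|H]; first exact: IH kn Pk.
exists n; split=> // k Pk; rewrite leqNgt; apply/negP => kn; apply: H; exists k; exact: (conj kn Pk).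
Qed.

Theorem theorem3p2 (R : pzRingType) (a b c d : R)
  (h1 : b * d * b = b * a * c) (h2 : d * b * d = a * c * d)
  (hac : pdrazin (a * c)) :
  [/\ pdrazin (b * d),
      (forall y : R, pdrazin_inv (a * c) y -> pdrazin_inv (b * d) (b * y ^+ 2 * d)) &
      (forall n : nat, pdrazin_index (a * c) n ->
         exists m : nat, pdrazin_index (b * d) m /\ (m <= n.+1)%N)].
Proof.
have h1' : b * d * b = b * (a * c) by rewrite h1 mulrA.
have key : forall y, pdrazin_inv (a * c) y ->
    pdrazin_inv (b * d) (b * y ^+ 2 * d) /\
    forall k, jacobson ((a * c) ^+ k - (a * c) ^+ k.+1 * y) ->
      jacobson ((b * d) ^+ k.+1 - (b * d) ^+ k.+2 * (b * y ^+ 2 * d)).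
  move=> y [yxy yc [k [k0 Jk]]].
  have yC : y * (a * c) = (a * c) * y by apply: yc.
  have cdb : comm_set (a * c) (d * b).
    by rewrite /comm_set mulrA -h2 -(mulrA d b (a * c)) -h1' !mulrA.
  have ydb : y * (d * b) = d * b * y by apply: yc.
  split; last by move=> j Jj; apply: (@zj _ b d (a * c) y).
  split.
  - by apply: (@zi _ b d (a * c) y).
  - move=> w hw; apply: (@zc _ b d (a * c) y) => //.
    apply: yc; rewrite /comm_set.
    have e : a * c * (d * w * b) = d * (b * d * w) * b by rewrite !mulrA -h2.
    rewrite e hw -(mulrA (d * w) b) -h1' !mulrA //.
  - exists k.+1; split => //; exact: (@zj _ b d (a * c) y).
split.
- by have [y hy] := hac; exists (b * y ^+ 2 * d); case: (key y hy).
- by move=> y hy; case: (key y hy).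
- move=> n [y [hy n0 Jn mn]].
  have [hz Jz] := key y hy.
  have [m [[m0 Jm] mm]] := ex_min (P := fun k => (0 < k)%N /\
      jacobson ((b * d) ^+ k - (b * d) ^+ k.+1 * (b * y ^+ 2 * d))) (conj (isT : (0 < n.+1)%N) (Jz n Jn)).
  exists m; split; last by apply: (mm n.+1); split => //; exact: Jz.
  exists (b * y ^+ 2 * d); split => // k k0 Jk; exact: mm (conj k0 Jk).
Qed.
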